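(* Let $k\geq0$, $q\geq1$, $m\ge1$ and $\gamma=(\gamma_1,\ldots,\gamma_m)\in\mathbb{Z}^m$ with $\gamma_1\ge 2$ and $2\le\gamma_{i+1}\le\gamma_i+1$ for all $1\le i<m$. Then \[F^{1234}(k,q,\gamma)=\begin{cases} s^k & m=1,\\ F^{2143}(k,q,\gamma) & q=1,\\ F^{1234}(k,q{-}1,\gamma)+F^{1234}(\gamma_1{+}1{-}\gamma_2{+}k,q,\gamma') & m\geq2,\ q\geq2. \end{cases}\]
   Context: For $\pi\in\{1234,2143\}$ define successor functions on integer triples. $\mathrm{suc}^{2143}(x,y,z)=\emptyset$ if $z\le0$ and for $z\ge1$, $\mathrm{suc}^{2143}(x,y,z)=\{(2,y{+}1,z),\ldots,(x{+}1,y{+}1,z)\}\cup\{(x,x{+}1,z),\ldots,(x,y,z)\}\cup\mathrm{suc}^{2143}(x,x,z{-}1)$. $\mathrm{suc}^{1234}(x,y,1)=\{(2,y{+}1,1),\ldots,(x{+}1,y{+}1,1)\}\cup\{(x,x{+}1,1),\ldots,(x,y,1)\}$ and for $z\ge2$, $\mathrm{suc}^{1234}(x,y,z)=\{(2,y{+}1,z),\ldots,(x{+}1,y{+}1,z)\}\cup\mathrm{suc}^{1234}(x,y,z{-}1)$ (sets of the form $\{(x,x{+}1,\cdot),\ldots,(x,y,\cdot)\}$ are empty if $y\le x$). A path in $\mathcal{P}^{\pi}$ is a finite sequence $P=(v_1,\ldots,v_r)$, $r\ge1$, of points of $\mathbb{Z}^3$ with $v_1=(x,y,z)$, $2\le x\le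 y$, $z\ge1$, and $v_{i+1}\in\mathrm{suc}^{\pi}(v_i)$; its length is $\ell(P)=r$. For $P\in\mathcal{P}^{2143}$, an edge from $(x_1,y_1,z_1)$ to $(x_2,y_2,z_2)$ is recorded if either $z_1=z_2$ and $y_2=y_1+1$, or $z_1>z_2$. For $P\in\mathcal{P}^{1234}$, such an edge is recorded if $y_2=y_1+1$. The signature of $P$ is the tuple of the $x$-coordinate of $v_1$ followed by the $x$-coordinates of the endpoints of the recorded edges, in order. For $k\ge0$, $q\ge1$, $\gamma\in\mathbb{Z}^m$, $m\ge1$, $\mathcal{P}^{\pi}_{k,q,\gamma}$ is the set of paths in $\mathcal{P}^{\pi}$ starting at $(\gamma_1,\gamma_1+k,q)$ with signature $\gamma$, and $F^{\pi}(k,q,\gamma)=\sum_{P\in\mathcal{P}^{\pi}_{k,q,\gamma}}t^{\ell(P)-m}$ (formal power series in $t$), with the convention $F^{\pi}(k,q,\gamma)=0$ if $q\le0$ or $\gamma$ is empty. Write $s=1/(1-t)$ and $\gamma'=(\gamma_2,\ldots,\gamma_m)$ (empty if $m=1$). *)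

(* Defs.v *)
From mathcomp Require Import all_boot all_order all_algebra.
Set Implicit Arguments. Unset Strict Implicit. Unset Printing Implicit Defensive.
Import Order.TTheory GRing.Theory Num.Theory.
Local Open Scope ring_scope.

Definition point := (int * int * int)%type.
Definition px (v : point) : int := v.1.1.
Definition py (v : point) : int := v.1.2.
Definition pz (v : point) : int := v.2.

Definition irange (a b : int) : seq int :=
  if a <= b then [seq a + (i%:Z) | i <- iota 0 (absz (b - a + 1))] else [::].

Definition sucA (x y z : int) : seq point :=
  [seq (a, y + 1, z) | a <- irange 2 (x + 1)].
Definition sucB (x y z : int) : seq point :=
  [seq (x, b, z) | b <- irange (x + 1) y].

Fixpoint suc2143_aux (n : nat) (x y : int) : seq point :=
  match n with
  | 0%N => [::]
  | n'.+1 => sucA x y (Posz n) ++ sucB x y (Posz n) ++ suc2143_aux n' x x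
  end.

Definition suc2143 (v : point) : seq point :=
  if pz v <= 0 then [::] else undup (suc2143_aux (absz (pz v)) (px v) (py v)).

Fixpoint suc1234_aux (n : nat) (x y : int) : seq point :=
  match n with
  | 0%N => [::]
  | 1%N => sucA x y 1 ++ sucB x y 1
  | n'.+1 => sucA x y (Posz n) ++ suc1234_aux n' x y
  end.

(* suc^1234 is only specified for z >= 1; paths never reach z <= 0 *)
Definition suc1234 (v : point) : seq point :=
  if pz v <= 0 then [::] else undup (suc1234_aux (absz (pz v)) (px v) (py v)).

Inductive perm_kind := P1234 | P2143.

Definition suc (pi : perm_kind) : point -> seq point :=
  match pi with P1234 => suc1234 | P2143 => suc2143 end.

Fixpoint paths_from (sc : point -> seq point) (r : nat) (v : point)
  : seq (seq point) :=
  match r with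
  | 0%N => [::]
  | 1%N => [:: [:: v]]
  | r'.+1 => [seq v :: p | w <- sc v, p <- paths_from sc r' w]
  end.

Definition valid_start (v : point) : bool :=
  (2 <= px v) && (px v <= py v) && (1 <= pz v).

Definition recorded (pi : perm_kind) (v w : point) : bool :=
  match pi with
  | P2143 => ((pz v == pz w) && (py w == py v + 1)) || (pz w < pz v)
  | P1234 => py w == py v + 1
  end.

Fixpoint rec_ends (pi : perm_kind) (prev : point) (ws : seq point) : seq int :=
  match ws with
  | [::] => [::]
  | w :: ws' => (if recorded pi prev w then [:: px w] else [::])
                  ++ rec_ends pi w ws'
  end.

Definition signature (pi : perm_kind) (P : seq point) : seq int :=
  match P with
  | [::] => [::]
  | v :: ws => px v :: rec_ends pi v ws
  end.

Definition series := nat -> nat.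
Definition sadd (f g : series) : series := fun n => (f n + g n)%N.
Definition smul (f g : series) : series :=
  fun n => (\sum_(i < n.+1) f i * g (n - i))%N.
Definition sone : series := fun n => (n == 0)%N : nat.
(* s = 1/(1-t) = 1 + t + t^2 + ... *)
Definition s_series : series := fun _ => 1%N.
Definition spow (f : series) (k : nat) : series := iter k (smul f) sone.

Definition F (pi : perm_kind) (k q : int) (gamma : seq int) : series :=
  fun n =>
    if (q <= 0) || (gamma == [::]) then 0%N else
    let v := (head 0 gamma, head 0 gamma + k, q) in
    if valid_start v then
      count (fun P => signature pi P == gamma)
            (paths_from (suc pi) (n + size gamma) v)
    else 0%N.

(* Main.v *)
Require Import Defs.
From mathcomp Require Import all_boot all_order all_algebra zify.
From Stdlib Require Import FunctionalExtensionality.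
Import Order.TTheory GRing.Theory Num.Theory.
Local Open Scope ring_scope.

Lemma paths_step (sc : point -> seq point) r v : paths_from sc r.+2 v =
  flatten [seq [seq v :: p | p <- paths_from sc r.+1 w] | w <- sc v].
Proof. by []. Qed.

Lemma paths_head sc r v P : P \in paths_from sc r v -> P = v :: behead P.
Proof.
case: r => [//|[|r]]; first by rewrite /= inE => /eqP->.
by rewrite paths_step => /flatten_mapP [w _ /mapP [p _ ->]].
Qed.

Lemma count_step sc r v (a : pred (seq point)) :
  count a (paths_from sc r.+2 v) =
  (\sum_(w <- sc v) count (fun p => a (v :: p)) (paths_from sc r.+1 w))%N.
Proof.
rewrite paths_step count_flatten sumnE big_map.
rewrite big_map; apply: eq_bigr => w _.
by rewrite count_map.
Qed.

Lemma sum_undup_sub (T : eqType) (s t : seq T) (f : T -> nat) :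
  {subset t <= s} -> (forall w, w \in s -> w \notin t -> f w = 0%N) ->
  (\sum_(w <- undup s) f w = \sum_(w <- undup t) f w)%N.
Proof.
move=> sub z.
rewrite (bigID (fun w => w \in t)) /= [X in (_ + X)%N]big1_seq ?addn0; last first.
  by move=> w /andP [nt]; rewrite mem_undup => ws; apply: z.
rewrite -big_filter; apply: perm_big; apply: uniq_perm.
- exact: filter_uniq (undup_uniq _).
- exact: undup_uniq.
move=> w; rewrite mem_filter !mem_undup /=; case wt: (w \in t) => //=.
by rewrite sub.
Qed.

Lemma mem_irange (a b c : int) : (c \in irange a b) = (a <= c <= b).
Proof.
rewrite /irange; case: ifP => ab.
  apply/mapP/idP.
    by case=> i; rewrite mem_iota => /andP[_ lt] ->; lia.
  move=> h; exists (absz (c - a)); first by rewrite mem_iota; lia.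
  lia.
by rewrite in_nil; lia.
Qed.

Lemma irange_iota (a : int) (j : nat) :
  irange a (a + j%:Z - 1) = [seq a + i%:Z | i <- iota 0 j].
Proof.
rewrite /irange; case: j => [|j].
  by rewrite ifF //; lia.
rewrite ifT; last by lia.
by congr map; congr iota; lia.
Qed.

Lemma irange_uniq a b : uniq (irange a b).
Proof.
rewrite /irange; case: ifP => // _.
rewrite map_inj_uniq ?iota_uniq // => i j /addrI; lia.
Qed.

Lemma aux_S x y (n : nat) : (1 <= n)%N ->
  suc1234_aux n.+1 x y = sucA x y (n.+1)%:Z ++ suc1234_aux n x y.
Proof. by case: n. Qed.

Lemma subB x y (n : nat) : (1 <= n)%N -> {subset sucB x y 1 <= suc1234_aux n x y}.
Proof.
elim: n => [//|[|n] IH] _ w wB; first by rewrite /= mem_cat wB orbT.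
by rewrite aux_S // mem_cat IH ?orbT.
Qed.

Lemma mem_sucA x y z w : w \in sucA x y z ->
  [/\ py w = y + 1, pz w = z & 2 <= px w <= x + 1].
Proof. by case/mapP => a; rewrite mem_irange => h ->. Qed.

Lemma mem_sucB x y z w : w \in sucB x y z ->
  [/\ px w = x, pz w = z & x + 1 <= py w <= y].
Proof. by case/mapP => a; rewrite mem_irange => h ->. Qed.

Lemma auxAB x y (n : nat) w : w \in suc1234_aux n x y ->
  w \in sucB x y 1 \/ [/\ py w = y + 1, 1 <= pz w <= n%:Z & 2 <= px w <= x + 1].
Proof.
elim: n => [//|[|n] IH].
  rewrite /= mem_cat => /orP [/mem_sucA [h1 h2 h3]|->]; last by left.
  by right; split => //; rewrite h2.
rewrite aux_S // mem_cat => /orP [/mem_sucA [h1 h2 h3]|/IH [->|[h1 h2 h3]]].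
- by right; split => //; rewrite h2; lia.
- by left.
- by right; split => //; lia.
Qed.

Definition S j n := spow s_series j n.

Lemma S0n n : S 0 n = (n == 0)%N. Proof. by []. Qed.

Lemma SSn j n : S j.+1 n = (\sum_(i < n.+1) S j (n - i))%N.
Proof. by rewrite /S /spow iterS /smul; apply: eq_bigr => i _; rewrite mul1n. Qed.

Lemma Sj0 j : S j 0 = 1%N.
Proof. by elim: j => // j IH; rewrite SSn big_ord1. Qed.

Lemma SSS j n : S j.+1 n.+1 = (S j.+1 n + S j n.+1)%N.
Proof.
by rewrite SSn big_ord_recl subn0 addnC SSn.
Qed.

Lemma Ssum j n : S j n.+1 = (\sum_(i <- iota 0 j) S i.+1 n)%N.
Proof.
elim: j => [|j IH]; first by rewrite /= big_nil.
rewrite SSS IH -addn1 iotaD big_cat /= big_seq1 addnC.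
by rewrite add0n addn1.
Qed.

Lemma sucB_uniq x y z : uniq (sucB x y z).
Proof. by rewrite map_inj_uniq ?irange_uniq // => a b []. Qed.

Lemma case1 (x : int) n : forall (j : nat) (z : int), 1 <= z ->
  count (fun P => signature P1234 P == [:: x])
        (paths_from suc1234 n.+1 (x, x + j%:Z, z)) = S j n.
Proof.
elim: n => [|n IH] j z hz.
  by rewrite /= eqxx Sj0.
rewrite count_step.
have -> : suc1234 (x, x + j%:Z, z) = undup (suc1234_aux (absz z) x (x + j%:Z)).
  by rewrite /suc1234 /= ifF //; lia.
rewrite (sum_undup_sub _ _ (sucB x (x + j%:Z) 1)); last 2 first.
- by apply: subB; lia.
- move=> w /auxAB [->//|[h1 h2 h3]] _.
  rewrite (eq_in_count (a2 := pred0)) ?count_pred0 // => p /paths_head -> /=.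
  by rewrite h1 /px /py /= eqxx /= eqseq_cons andbF.
rewrite undup_id ?sucB_uniq // Ssum /sucB.
have -> : x + j%:Z = (x + 1) + j%:Z - 1 by lia.
rewrite irange_iota -map_comp big_map.
apply: eq_big_seq => i; rewrite mem_iota => /andP [_ ij].
rewrite [(_ \o _) i]/=.
have -> : x + 1 + i%:Z = x + (i.+1)%:Z by lia.
rewrite -(IH i.+1 1) //.
apply: eq_in_count => p /paths_head -> /=.
rewrite ifF // /py /=; apply/negbTE; lia.
Qed.

Lemma suc_eq1 v : pz v = 1 -> suc1234 v = suc2143 v.
Proof. by move=> h; rewrite /suc1234 /suc2143 h /= cats0. Qed.

Lemma suc1_z {v w} : pz v = 1 -> w \in suc1234 v -> pz w = 1.
Proof.
move=> h; rewrite /suc1234 h /= mem_undup mem_cat.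
by case/orP => [/mem_sucA [_ -> _]|/mem_sucB [_ -> _]].
Qed.

Lemma paths_eq r v : pz v = 1 -> paths_from suc1234 r v = paths_from suc2143 r v.
Proof.
elim: r v => [//|r IH] v h; case: r IH => [//|r] IH.
rewrite !paths_step -suc_eq1 //; congr flatten; apply/eq_in_map => w wi.
by rewrite IH // (suc1_z h wi).
Qed.

Lemma paths_z {r v P} : pz v = 1 -> P \in paths_from suc1234 r v ->
  all (fun w => pz w == 1) P.
Proof.
elim: r v P => [//|r IH] v P h; case: r IH => [|r] IH.
  by rewrite /= inE => /eqP -> /=; rewrite h eqxx.
rewrite paths_step => /flatten_mapP [w wi /mapP [p pi ->]] /=.
by rewrite h eqxx /=; exact: IH (suc1_z h wi) pi.
Qed.

Lemma rec_eq prev ws : pz prev = 1 -> all (fun w => pz w == 1) ws ->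
  rec_ends P1234 prev ws = rec_ends P2143 prev ws.
Proof.
elim: ws prev => [//|w ws IH] prev h /andP [/eqP hw hws] /=.
by rewrite IH // /recorded h hw eqxx /= ltxx orbF.
Qed.

Lemma sig_eq r v P : pz v = 1 -> P \in paths_from suc1234 r v ->
  signature P1234 P = signature P2143 P.
Proof.
move=> h Pi; have := paths_z h Pi.
by case: P Pi => [//|u ws] Pi /= /andP [/eqP hu hws]; rewrite rec_eq.
Qed.

Lemma rec_py prev prev' p : py prev = py prev' ->
  rec_ends P1234 prev p = rec_ends P1234 prev' p.
Proof. by case: p => //= w p h; rewrite /recorded h. Qed.

Lemma split_sum (T : eqType) (A L : seq T) (f : T -> nat) w0 :
  w0 \in A -> w0 \notin L -> (forall w, w \in A -> w != w0 -> f w = 0%N) ->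
  (\sum_(w <- undup (A ++ L)) f w = \sum_(w <- undup L) f w + f w0)%N.
Proof.
move=> w0A w0L z.
rewrite (eq_bigr (fun w => (if w \in L then f w else 0) + (if w \in L then 0 else f w))%N);
  last by move=> w _; case: ifP; rewrite ?addn0.
rewrite big_split /=; congr (_ + _)%N.
  rewrite (sum_undup_sub _ _ L); last 2 first.
  - by move=> w wL; rewrite mem_cat wL orbT.
  - by move=> w _ /negbTE ->.
  by apply: eq_big_seq => w; rewrite mem_undup => ->.
rewrite (sum_undup_sub _ _ [:: w0]); last 2 first.
- by move=> w; rewrite inE => /eqP ->; rewrite mem_cat w0A.
- move=> w wAL; rewrite inE => ne; case: ifP => // wL; apply: z ne.
  by move: wAL; rewrite mem_cat wL orbF.
by rewrite /= big_seq1 (negbTE w0L).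
Qed.

Lemma case3 (x y g2 : int) (gs : seq int) (Q r : nat) : (1 <= Q)%N ->
  2 <= g2 <= x + 1 ->
  count (fun P => signature P1234 P == [:: x, g2 & gs])
        (paths_from suc1234 r.+2 (x, y, (Q.+1)%:Z)) =
  (count (fun P => signature P1234 P == [:: x, g2 & gs])
        (paths_from suc1234 r.+2 (x, y, Q%:Z)) +
   count (fun P => signature P1234 P == g2 :: gs)
        (paths_from suc1234 r.+1 (g2, (y + 1)%R, (Q.+1)%:Z)))%N.
Proof.
move=> hQ hg.
rewrite !count_step.
have -> : suc1234 (x, y, (Q.+1)%:Z) = undup (sucA x y (Q.+1)%:Z ++ suc1234_aux Q x y).
  by rewrite /suc1234 /pz /=; case: (Q) hQ.
have -> : suc1234 (x, y, Q%:Z) = undup (suc1234_aux Q x y).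
  by rewrite /suc1234 /pz /= ifF //; lia.
rewrite (split_sum _ _ _ _ (g2, y + 1, (Q.+1)%:Z)); last 3 first.
- by apply/mapP; exists g2; rewrite ?mem_irange.
- apply/negP => /auxAB [/mem_sucB [_ h _]|[_ h _]]; move: h; rewrite /pz /=; lia.
- case=> [[a b] c] /mem_sucA [h1 h2 h3] ne.
  rewrite /px /py /pz /= in h1 h2 h3; subst b c.
  have ag : a != g2 by apply: contraNneq ne => ->.
  rewrite (eq_in_count (a2 := pred0)) ?count_pred0 // => p /paths_head -> /=.
  by rewrite /py /= eqxx /= !eqseq_cons eqxx /= /px /= (negbTE ag).
congr (_ + _)%N.
  apply: eq_bigr => w _; apply: eq_count => p /=.
  by rewrite (rec_py _ (x, y, Q%:Z)).
apply: eq_in_count => p /paths_head -> /=.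
by rewrite /py /= eqxx /= !eqseq_cons eqxx.
Qed.

Theorem lemma3p5 (k q : int) (gamma : seq int) :
  0 <= k -> 1 <= q -> (1 <= size gamma)%N ->
  2 <= nth 0 gamma 0 ->
  (forall i : nat, (i.+1 < size gamma)%N ->
     2 <= nth 0 gamma i.+1 <= nth 0 gamma i + 1) ->
  [/\ (size gamma = 1%N -> F P1234 k q gamma = spow s_series (absz k)),
      (q = 1 -> F P1234 k q gamma = F P2143 k q gamma) &
      ((2 <= size gamma)%N -> 2 <= q ->
         F P1234 k q gamma =
         sadd (F P1234 k (q - 1) gamma)
              (F P1234 (nth 0 gamma 0 + 1 - nth 0 gamma 1 + k) q (behead gamma)))].
Proof.
move=> k0 q1 sz.
case: gamma sz => [//|x gs] _ /= g1 gi.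
split.
- case: gs gi => [|//] _ _; apply: functional_extensionality => n.
  have [j ->] : exists j : nat, k = j%:Z by exists (absz k); rewrite gez0_abs.
  rewrite /F /= ifF; last by apply/negbTE; rewrite orbF -ltNge; lia.
  rewrite ifT; last by rewrite /valid_start /px /py /pz /=; apply/andP; split; [apply/andP; split|]; lia.
  by rewrite addn1; apply: case1.
- move=> ->; apply: functional_extensionality => n.
  rewrite /F /=; case: ifP => // _.
  rewrite -paths_eq //; apply: eq_in_count => P Pi.
  by rewrite (sig_eq _ (x, x + k, 1) _ erefl Pi).
move=> sz2 q2; case: gs sz2 gi => [//|g2 gs] _ gi.
have /= hg2 := gi 0%N isT.
have [Q qQ hQ] : exists2 Q : nat, q = (Q.+1)%:Z & (1 <= Q)%N.
  by exists (absz (q - 1)); lia.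
subst q; apply: functional_extensionality => n.
rewrite /F /sadd /=.
have -> : (Q.+1)%:Z - 1 = Q%:Z by lia.
have -> : g2 + (x + 1 - g2 + k) = x + k + 1 by lia.
have -> : (Q%:Z <= 0) = false by apply/negbTE; rewrite -ltNge; lia.
rewrite /=.
rewrite !ifT; try by rewrite /valid_start /px /py /pz /=; apply/andP; split; [apply/andP; split|]; lia.
by rewrite !addnS case3.
Qed.
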